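(* Let $\mathfrak{M}=(S,\mathcal{L})$ be a partial Steiner triple system and let $H_1,H_2$ be distinct hyperplanes of $\mathfrak{M}$. Then the set $$H_1\pitchfork H_2:=(H_1\cap H_2)\cup\big((S\setminus H_1)\cap(S\setminus H_2)\big)=S\setminus(H_1\,\triangle\, H_2)$$ is also a hyperplane of $\mathfrak{M}$.
   Context: A partial Steiner triple system (PSTS) is a partial linear space $(S,\mathcal{L})$ (any two distinct points lie on at most one line) in which every line has exactly $3$ points and every point lies on the same number of lines. A subspace of $\mathfrak{M}$ is a set $U\subseteq S$ such that every line having at least two points in $U$ is contained in $U$. A hyperplane of $\mathfrak{M}$ is a proper subspace $H\subsetneq S$ which meets every line of $\mathfrak{M}$. $\triangle$ denotes symmetric difference. *)

(* Defs.v *)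
From Stdlib Require Import Classical.

Definition line_set (P : Type) := (P -> Prop) -> Prop.

Definition three_point_lines {P : Type} (Ls : line_set P) : Prop :=
  forall l, Ls l -> exists a b c : P,
    a <> b /\ a <> c /\ b <> c /\ (forall x, l x <-> (x = a \/ x = b \/ x = c)).

Definition partial_linear {P : Type} (Ls : line_set P) : Prop :=
  forall l1 l2 x y, Ls l1 -> Ls l2 -> x <> y ->
    l1 x -> l1 y -> l2 x -> l2 y -> forall z, l1 z <-> l2 z.

Definition lines_through {P : Type} (Ls : line_set P) (p : P) : Type :=
  { l : P -> Prop | Ls l /\ l p }.

(* every point lies on the same number of lines (equal cardinalities,
   expressed by bijections, so that infinite systems are allowed) *)
Definition regular {P : Type} (Ls : line_set P) : Prop :=
  forall p q : P, exists (f : lines_through Ls p -> lines_through Ls q)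
                         (g : lines_through Ls q -> lines_through Ls p),
    (forall u, g (f u) = u) /\ (forall v, f (g v) = v).

Definition PSTS {P : Type} (Ls : line_set P) : Prop :=
  partial_linear Ls /\ three_point_lines Ls /\ regular Ls.

Definition subspace {P : Type} (Ls : line_set P) (U : P -> Prop) : Prop :=
  forall l x y, Ls l -> l x -> l y -> x <> y -> U x -> U y ->
    forall z, l z -> U z.

Definition hyperplane {P : Type} (Ls : line_set P) (H : P -> Prop) : Prop :=
  subspace Ls H /\ (exists x, ~ H x) /\
  (forall l, Ls l -> exists x, l x /\ H x).

Definition pitchfork {P : Type} (H1 H2 : P -> Prop) : P -> Prop :=
  fun x => (H1 x /\ H2 x) \/ (~ H1 x /\ ~ H2 x).

(* Main.v *)
Require Import Defs.
From Stdlib Require Import Classical.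

Definition pat {P : Type} (U : P -> Prop) (a b c : P) : Prop :=
  (U a /\ U b /\ U c) \/ (U a /\ ~U b /\ ~U c) \/ (~U a /\ U b /\ ~U c) \/ (~U a /\ ~U b /\ U c).

Lemma hyp_pat {P : Type} (Ls : line_set P) (H : P -> Prop) l a b c :
  hyperplane Ls H -> Ls l -> a <> b -> a <> c -> b <> c ->
  (forall x, l x <-> (x = a \/ x = b \/ x = c)) -> pat H a b c.
Proof.
  intros [Hs [_ Hm]] Hl ab ac bc Hx.
  assert (la : l a) by (apply Hx; auto).
  assert (lb : l b) by (apply Hx; auto).
  assert (lc : l c) by (apply Hx; auto).
  destruct (Hm l Hl) as [w [lw Hw]].
  apply Hx in lw.
  unfold pat.
  destruct (classic (H a)), (classic (H b)), (classic (H c)); try tauto.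
  - elim H2. apply (Hs l a b); auto.
  - elim H1. apply (Hs l a c); auto.
  - elim H0. apply (Hs l b c); auto.
  - exfalso. destruct lw as [->|[->| ->]]; tauto.
Qed.

Lemma pat_hyp {P : Type} (Ls : line_set P) (U : P -> Prop) :
  three_point_lines Ls ->
  (forall l a b c, Ls l -> a <> b -> a <> c -> b <> c ->
    (forall x, l x <-> (x = a \/ x = b \/ x = c)) -> pat U a b c) ->
  (exists x, ~ U x) -> hyperplane Ls U.
Proof.
  intros T3 Hp Hne. split; [|split; [exact Hne|]].
  - intros l x y Hl lx ly xy Ux Uy z lz.
    destruct (T3 l Hl) as [a [b [c [ab [ac [bc Hx]]]]]].
    pose proof (Hp l a b c Hl ab ac bc Hx) as Hpt. unfold pat in Hpt.
    apply Hx in lx; apply Hx in ly; apply Hx in lz.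
    destruct lx as [->|[->| ->]]; destruct ly as [->|[->| ->]];
    destruct lz as [->|[->| ->]]; tauto.
  - intros l Hl.
    destruct (T3 l Hl) as [a [b [c [ab [ac [bc Hx]]]]]].
    pose proof (Hp l a b c Hl ab ac bc Hx) as Hpt. unfold pat in Hpt.
    destruct Hpt as [[? _]|[[? _]|[[_ [? _]]|[_ [_ ?]]]]].
    + exists a; split; [apply Hx; auto|auto].
    + exists a; split; [apply Hx; auto|auto].
    + exists b; split; [apply Hx; auto|auto].
    + exists c; split; [apply Hx; auto|auto].
Qed.

Theorem proposition1p5 (P : Type) (Ls : line_set P) (H1 H2 : P -> Prop) :
  PSTS Ls -> hyperplane Ls H1 -> hyperplane Ls H2 ->
  ~ (forall x, H1 x <-> H2 x) ->
  hyperplane Ls (pitchfork H1 H2).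
Proof.
  intros [_ [T3 _]] h1 h2 hne.
  apply pat_hyp; auto.
  - intros l a b c Hl ab ac bc Hx.
    pose proof (hyp_pat Ls H1 l a b c h1 Hl ab ac bc Hx) as p1.
    pose proof (hyp_pat Ls H2 l a b c h2 Hl ab ac bc Hx) as p2.
    unfold pat, pitchfork in *. tauto.
  - apply NNPP. intro Hn. apply hne. intro x.
    destruct (classic (H1 x)), (classic (H2 x)); try tauto;
    exfalso; apply Hn; exists x; unfold pitchfork; tauto.
Qed.
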